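(* Let $L$ be a Noetherian $\Sigma$-pseudofield such that $L^\sigma$ is a $\Sigma_1$-closed pseudofield. Then there exist a field $F$ and $n\ge1$ such that $L\cong\prod_{i=1}^nF_{\Sigma_1}(F)$ as $\Sigma_1$-rings.
   Context: All rings are commutative with $1$. Fix $\Sigma_0=\mathbb Z$ with generator $\sigma$, a finite abelian group $\Sigma_1=\mathbb Z/t_1\mathbb Z\oplus\dots\oplus\mathbb Z/t_s\mathbb Z$ ($t_i\ge2$), and $\Sigma=\Sigma_0\oplus\Sigma_1$. For a subgroup $\Sigma'\subseteq\Sigma$, a $\Sigma'$-ring is a ring with an action of $\Sigma'$ by ring automorphisms; $\Sigma'$-ideals are $\Sigma'$-stable ideals; $L^\sigma$ is the ring of $\sigma$-invariants. A $\Sigma'$-ring is $\Sigma'$-simple if its only $\Sigma'$-ideals are $0$ and itself ($\neq0$). A ring is absolutely flat if every module over it is flat. A $\Sigma'$-pseudofield is an absolutely flat $\Sigma'$-simple ring; Noetherian if it is a Noetherian ring. A $\Sigma_1$-pseudofield $C$ is $\Sigma_1$-closed if $\sqrt I=\mathbb I(\mathbb V(I))$ for every $n$ and every $\Sigma_1$-ideal $I$ of $C\{y_1,\dots,y_n\}_{\Sigma_1}$ (polynomial ring in indeterminates $\tau y_i$, $\tau\in\Sigma_1$), with $\mathbb V$ the common zero set in $C^n$ and $\mathbb I$ the ideal of vanishing polynomials. For a ring $F$, $F_{\Sigma_1}(F)=\{f:\Sigma_1\to F\}$ with componentwise ring operations and $\Sigma_1$-action $(\mu f)(\tau)=f(\mu^{-1}\tau)$.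 *)

(* Defs.v *)
From HB Require Import structures.
From mathcomp Require Import all_boot all_order all_algebra.
From mathcomp Require Import mpoly.
Set Implicit Arguments. Unset Strict Implicit. Unset Printing Implicit Defensive.
Import Order.TTheory GRing.Theory Num.Theory.
Local Open Scope ring_scope.

Definition is_ring_action (A : zmodType) (L : comNzRingType) (act : A -> L -> L) :=
  [/\ forall a x y, act a (x + y) = act a x + act a y,
      forall a x y, act a (x * y) = act a x * act a y,
      forall a, act a 1 = 1,
      forall x, act 0 x = x &
      forall a b x, act (a + b) x = act a (act b x)].

Definition is_ideal (L : comNzRingType) (I : L -> Prop) :=
  [/\ I 0, forall x y, I x -> I y -> I (x + y) & forall a x, I x -> I (a * x)].

Definition is_act_ideal (A : zmodType) (L : comNzRingType) (act : A -> L -> L)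
  (I : L -> Prop) :=
  is_ideal I /\ forall a x, I x -> I (act a x).

Definition act_simple (A : zmodType) (L : comNzRingType) (act : A -> L -> L) :=
  (1 : L) != 0 /\
  forall I, is_act_ideal act I -> (forall x, I x <-> x = 0) \/ (forall x, I x).

Definition noetherian_ring (L : comNzRingType) :=
  forall I : L -> Prop, is_ideal I ->
    exists s : seq L, forall x,
      I x <-> exists c : 'I_(size s) -> L, x = \sum_(i < size s) c i * s`_i.

(* Flat module, via the equational criterion of flatness (no tensor products
   are available in the library). *)
Definition flat_module (L : comNzRingType) (M : lmodType L) :=
  forall (k : nat) (a : 'I_k -> L) (m : 'I_k -> M),
    \sum_(i < k) a i *: m i = 0 ->
    exists (l : nat) (b : 'I_k -> 'I_l -> L) (m' : 'I_l -> M),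
      (forall i, m i = \sum_(j < l) b i j *: m' j) /\
      (forall j, \sum_(i < k) a i * b i j = 0).

Definition absolutely_flat (L : comNzRingType) :=
  forall M : lmodType L, flat_module M.

Definition act_pseudofield (A : zmodType) (L : comNzRingType) (act : A -> L -> L) :=
  absolutely_flat L /\ act_simple act.

Section Closed.
Variables (G : finZmodType) (C : comNzRingType) (actC : G -> C -> C) (n : nat).

(* the difference polynomial ring C{y_1..y_n}_G : polynomials in the
   indeterminates tau y_i (i < n, tau in G); the indeterminate tau y_i is
   'X_(dvar (i, tau)). *)
Definition dvar (p : 'I_n * G) : 'I_#|{: 'I_n * G}| := enum_rank p.
Definition dpoly := {mpoly C[#|{: 'I_n * G}|]}.

Definition dpoly_act (mu : G) (p : dpoly) : dpoly :=
  mmap (fun c => (actC mu c)%:MP)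
       (fun j => 'X_(dvar ((enum_val j).1, mu + (enum_val j).2))) p.

Definition dpoly_eval (p : dpoly) (a : 'I_n -> C) : C :=
  p.@[fun j => actC (enum_val j).2 (a (enum_val j).1)].

Definition zero_set (I : dpoly -> Prop) : ('I_n -> C) -> Prop :=
  fun a => forall p, I p -> dpoly_eval p a = 0.

Definition vanishing_ideal (V : ('I_n -> C) -> Prop) : dpoly -> Prop :=
  fun p => forall a, V a -> dpoly_eval p a = 0.

Definition radical (I : dpoly -> Prop) : dpoly -> Prop :=
  fun p => exists k : nat, I (p ^+ k).
End Closed.

Definition act_closed (G : finZmodType) (C : comNzRingType) (actC : G -> C -> C) :=
  forall (n : nat) (I : dpoly G C n -> Prop),
    is_act_ideal (@dpoly_act G C actC n) I ->
    forall p, radical I p <-> vanishing_ideal actC (zero_set actC I) p.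

(* "L^sigma is a Sigma_1-closed (Sigma_1-)pseudofield": some ring C with a
   G-action, isomorphic (G-equivariantly) to the ring of sigma-invariants
   of L (sigma = action of (1,0)), equipped with the restricted G-action, is a
   Sigma_1-closed Sigma_1-pseudofield. *)
Definition invariants_closed_pseudofield (G : finZmodType) (L : comNzRingType)
  (act : (int * G)%type -> L -> L) :=
  exists (C : comNzRingType) (actC : G -> C -> C) (iota : C -> L),
    [/\ is_ring_action actC,
        [/\ forall x y, iota (x + y) = iota x + iota y,
            forall x y, iota (x * y) = iota x * iota y,
            iota 1 = 1 & injective iota],
        forall y : L, (exists c, iota c = y) <-> act (1%:Z, 0) y = y,
        forall mu c, iota (actC mu c) = act (0, mu) (iota c) &
        act_pseudofield actC /\ act_closed actC].

(* Main.v *)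
Require Import Defs.
From HB Require Import structures.
From mathcomp Require Import all_boot all_order all_algebra.
From mathcomp Require Import mpoly.
From mathcomp Require Import ring_quotient generic_quotient.
From Stdlib Require Import ClassicalEpsilon FunctionalExtensionality.
From mathcomp Require Import ring.
Import GRing.Theory.
Local Open Scope ring_scope.
Set Implicit Arguments. Unset Strict Implicit. Unset Printing Implicit Defensive.

Section RegQ.
Local Open Scope quotient_scope.
Variables (L : comNzRingType) (a : L).
Hypothesis Hnu : ~ exists z, a * z = 1.

Definition inI : {pred L} := fun x =>
  if excluded_middle_informative (exists z, x = a * z) then true else false.

Lemma inIP x : reflect (exists z, x = a * z) (inI x).
Proof. rewrite /inI; case: excluded_middle_informative => h; by constructor. Qed.

Lemma inI_closed : idealr_closed inI.
Proof.
split.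
- by apply/inIP; exists 0; rewrite mulr0.
- apply/inIP => -[z hz]; apply: Hnu; by exists z.
- move=> b u v /inIP[z1 ->] /inIP[z2 ->]; apply/inIP; exists (b * z1 + z2).
  by rewrite mulrDr mulrCA.
Qed.

HB.instance Definition _ := isIdealr.Build L inI inI_closed.

Definition Q := {ideal_quot inI}.
Definition Mq := Q.
HB.instance Definition _ := GRing.Zmodule.on Mq.
Definition qscale (b : L) (q : Mq) : Mq := (\pi_Q b * (q : Q) : Q).
Lemma qscaleA b c v : qscale b (qscale c v) = qscale (b * c) v.
Proof. by rewrite /qscale rmorphM mulrA. Qed.
Lemma qscale1 : left_id 1 qscale.
Proof. by move=> v; rewrite /qscale rmorph1 mul1r. Qed.
Lemma qscaleDr : right_distributive qscale +%R.
Proof. by move=> b u v; rewrite /qscale mulrDr. Qed.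
Lemma qscaleDl v : {morph qscale^~ v: b c / b + c}.
Proof. by move=> b c; rewrite /qscale rmorphD mulrDl. Qed.
HB.instance Definition _ := GRing.Zmodule_isLmodule.Build L Mq qscaleA qscale1 qscaleDr qscaleDl.

Lemma reg_from_flat : flat_module Mq -> exists y, a = a * a * y.
Proof.
move=> Hf.
have := Hf 1%N (fun _ => a) (fun _ => (1 : Q) : Mq).
case.
  rewrite big_ord1 /= /GRing.scale /= /qscale mulr1.
  apply/eqP; rewrite -(rmorph0 (\pi_Q : {rmorphism L -> Q})). 
  by rewrite -Quotient.idealrBE subr0; apply/inIP; exists 1; rewrite mulr1.
move=> l [b [m' [H1 H2]]].
have := H1 ord0.
rewrite /GRing.scale /= /qscale.
set s := \sum_(j < l) _.
have -> : s = \pi_Q (\sum_(j < l) b ord0 j * repr (m' j : Q)).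
  rewrite rmorph_sum; apply: eq_bigr => j _; rewrite rmorphM; congr (_ * _); symmetry; exact: reprK.
move=> /esym/eqP; rewrite -(rmorph1 (\pi_Q : {rmorphism L -> Q})) -Quotient.idealrBE.
move=> /inIP[z hz].
exists (-z).
have : a * (\sum_(j < l) b ord0 j * repr (m' j : Q) - 1) = a * (a * z) by rewrite hz.
rewrite mulrBr mulr1 mulr_sumr.
rewrite big1; last first.
  by move=> j _; have := H2 j; rewrite big_ord1 mulrA => ->; rewrite mul0r.
rewrite sub0r => h. by rewrite mulrN -mulrA -h opprK.
Qed.
End RegQ.

Lemma regular (L : comNzRingType) : absolutely_flat L -> forall a : L, exists y, a = a * a * y.
Proof.
move=> Hf a.
case: (classic (exists z, a * z = 1)) => [[z hz]|hnu].
  by exists z; rewrite -mulrA hz mulr1.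
exact: (reg_from_flat (Hf (Mq hnu))).
Qed.

Section FieldQ.
Local Open Scope quotient_scope.
Variables (L : comNzRingType) (e : L).
Hypothesis He0 : e != 0.
Hypothesis Hf : forall x, x * e = 0 \/ exists y, x * e * y = e.

Definition inJ : {pred L} := fun x => x * e == 0.
Lemma inJ_closed : idealr_closed inJ.
Proof.
split.
- by rewrite /inJ unfold_in /= mul0r.
- by rewrite /inJ unfold_in /= mul1r.
- move=> b u v; rewrite /inJ !unfold_in /= => /eqP hu /eqP hv.
  by rewrite mulrDl -mulrA hu hv mulr0 addr0.
Qed.
HB.instance Definition _ := isIdealr.Build L inJ inJ_closed.
Definition FQ := {ideal_quot inJ}.
HB.instance Definition _ := GRing.ComNzRing.on FQ.

Lemma piFQ_eq x y : (\pi_FQ x = \pi_FQ y) <-> x * e = y * e.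
Proof.
split.
  move/eqP; rewrite -Quotient.idealrBE /inJ unfold_in /= mulrBl subr_eq0; exact/eqP.
by move=> h; apply/eqP; rewrite -Quotient.idealrBE /inJ unfold_in /= mulrBl h subrr.
Qed.

Definition yinv (x : L) : L :=
  match excluded_middle_informative (exists y, x * e * y = e) with
  | left h => proj1_sig (constructive_indefinite_description _ h)
  | right _ => 0 end.

Lemma yinvP x : (exists y, x * e * y = e) -> x * e * yinv x = e.
Proof.
rewrite /yinv; case: excluded_middle_informative => // h _.
exact: proj2_sig (constructive_indefinite_description _ h).
Qed.

Definition finv (q : FQ) : FQ := \pi_FQ (yinv (repr q)).

Lemma pi_repr (q : FQ) : \pi_FQ (repr q) = q.
Proof. exact: reprK. Qed.

Lemma fmulVf (q : FQ) : q != 0 -> finv q * q = 1.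
Proof.
move=> hq.
have hr : repr q * e <> 0.
  move=> h; move/eqP: hq; apply.
  rewrite -[q]pi_repr -(rmorph0 (\pi_FQ : {rmorphism L -> FQ})).
  by apply/piFQ_eq; rewrite mul0r.
rewrite /finv -{2}[q]pi_repr -(rmorphM (\pi_FQ : {rmorphism L -> FQ})) -(rmorph1 (\pi_FQ : {rmorphism L -> FQ})).
apply/piFQ_eq; rewrite mul1r; have -> : yinv (repr q) * repr q * e = repr q * e * yinv (repr q) by ring.
by apply: yinvP; case: (Hf (repr q)).
Qed.

Lemma finv0 : finv 0 = 0.
Proof.
rewrite /finv /yinv; case: excluded_middle_informative => [[y hy]|].
  exfalso; move/eqP: He0; apply; rewrite -hy.
  have : \pi_FQ (repr (0:FQ)) = \pi_FQ 0 by rewrite pi_repr; exact/esym/(rmorph0 (\pi_FQ : {rmorphism L -> FQ})).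
  by move/piFQ_eq => ->; rewrite !mul0r.
by move=> _; exact: (rmorph0 (\pi_FQ : {rmorphism L -> FQ})).
Qed.

HB.instance Definition _ := GRing.ComNzRing_isField.Build FQ fmulVf finv0.
Definition FQF : fieldType := FQ.
Definition piF (x : L) : FQF := \pi_FQ x.
Lemma piF_eqE x y : piF x = piF y <-> x * e = y * e.
Proof. exact: piFQ_eq. Qed.
Lemma piF1 : piF 1 = 1.
Proof. exact: (rmorph1 (\pi_FQ : {rmorphism L -> FQ})). Qed.
Lemma piF0 : piF 0 = 0.
Proof. exact: (rmorph0 (\pi_FQ : {rmorphism L -> FQ})). Qed.
Lemma piFD x y : piF (x + y) = piF x + piF y.
Proof. exact: (rmorphD (\pi_FQ : {rmorphism L -> FQ})). Qed.
Lemma piFM x y : piF (x * y) = piF x * piF y.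
Proof. exact: (rmorphM (\pi_FQ : {rmorphism L -> FQ})). Qed.
Lemma piF_repr (q : FQF) : piF (repr (q : FQ)) = q.
Proof. exact: reprK. Qed.
Lemma piF_sum I (r : seq I) (P : pred I) (f : I -> L) :
  piF (\sum_(i <- r | P i) f i) = \sum_(i <- r | P i) piF (f i).
Proof. exact: (big_morph piF piFD piF0). Qed.
End FieldQ.



Section Idem.
Variable L : comNzRingType.
Definition idem (x : L) := x * x = x.
Definition prim (e : L) :=
  [/\ idem e, e != 0 & forall f, idem f -> f * e = f -> f = 0 \/ f = e].

Lemma prim_idem e a : prim e -> idem a -> a * e = 0 \/ a * e = e.
Proof.
case=> he _ hp ha; apply: hp.
  rewrite /idem; have -> : a * e * (a * e) = (a * a) * (e * e) by ring.
  by rewrite ha he.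
by rewrite -mulrA he.
Qed.

Lemma prim_orth e e' : prim e -> prim e' -> e * e' = 0 \/ e = e'.
Proof.
move=> pe pe'; case: (prim_idem pe' (let: And3 h _ _ := pe in h)) => h; first by left.
case: (prim_idem pe (let: And3 h _ _ := pe' in h)) => h'.
  by left; rewrite mulrC.
by right; rewrite -h' mulrC h.
Qed.

Lemma prim_field e : (forall a : L, exists y, a = a * a * y) -> prim e ->
  forall x, x * e = 0 \/ exists y, x * e * y = e.
Proof.
move=> reg pe x; have [y hy] := reg (x * e).
case: pe => he _ hp.
have hf : idem (x * e * y).
  rewrite /idem; have -> : x * e * y * (x * e * y) = (x * e * (x * e) * y) * y by ring.
  by rewrite -hy.
have hfe : x * e * y * e = x * e * y.
  have -> : x * e * y * e = x * (e * e) * y by ring.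
  by rewrite he.
case: (hp _ hf hfe) => h; last by right; exists y.
left; rewrite hy; have -> : x * e * (x * e) * y = x * e * (x * e * y) by ring.
by rewrite h mulr0.
Qed.

Lemma fin_max (n : nat) (P : 'I_n -> nat -> Prop) :
  (forall i k k', P i k -> (k <= k')%N -> P i k') ->
  (forall i, exists k, P i k) -> exists K, forall i, P i K.
Proof.
move=> mono h; have [f hf] := fin_all_exists h.
exists (\max_(i < n) f i) => i; apply: mono (hf i) _.
exact: leq_bigmax.
Qed.

Lemma exists_prim : noetherian_ring L -> exists e, prim e.
Proof.
move=> HN; apply: NNPP => Hno.
pose P e f := idem f /\ f * e = f /\ f != 0 /\ f != e.
pose next e := match excluded_middle_informative (exists f, P e f) with
  | left h => proj1_sig (constructive_indefinite_description _ h)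
  | right _ => e end.
have Hnext : forall e, idem e -> e != 0 -> P e (next e).
  move=> e he he0; rewrite /next; case: excluded_middle_informative => [h|h].
    exact: proj2_sig (constructive_indefinite_description _ h).
  exfalso; apply: Hno; exists e; split=> // f hf hfe.
  apply: NNPP => hn; apply: h; exists f; split=> //; split=> //; split.
    by apply/eqP => h0; apply: hn; left.
  by apply/eqP => h0; apply: hn; right.
pose fk k := iter k next 1.
have Hfk : forall k, idem (fk k) /\ fk k != 0.
  elim=> [|k [ih1 ih2]]; first by split; [rewrite /idem /= mulr1 | exact: oner_neq0].
  by have [h1 [_ [h3 _]]] := Hnext _ ih1 ih2.
have Hstep : forall k, P (fk k) (fk k.+1).
  move=> k; have [h1 h2] := Hfk k; exact: Hnext.
have Hchain : forall k m, (k <= m)%N -> fk m * fk k = fk m.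
  move=> k m /subnKC <-; elim: (m - k)%N => [|d ih].
    by rewrite addn0; case: (Hfk k).
  have [_ [h2 _]] := Hstep (k + d)%N.
  by rewrite addnS -[in LHS]h2 -mulrA ih h2.
have Hsub : forall k m, (k <= m)%N -> (1 - fk k) = (1 - fk m) * (1 - fk k).
  move=> k m hkm; have h := Hchain k m hkm.
  have [hk _] := Hfk k; have [hm _] := Hfk m.
  have -> : (1 - fk m) * (1 - fk k) = 1 - fk k - fk m + fk m * fk k by ring.
  by rewrite h addrNK.
pose I x := exists k z, x = (1 - fk k) * z.
have HI : is_ideal I.
  split.
  - by exists 0%N, 0; rewrite mulr0.
  - move=> x y [k [z ->]] [m [w ->]]; exists (maxn k m).
    exists ((1 - fk k) * z + (1 - fk m) * w).
    rewrite mulrDr !mulrA -Hsub ?leq_maxl // -Hsub ?leq_maxr //.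
  - move=> a x [k [z ->]]; exists k, (a * z); by rewrite mulrCA.
have [s Hs] := HN I HI.
have [K HK] : exists K, forall i : 'I_(size s), exists z, s`_i = (1 - fk K) * z.
  apply: fin_max.
    move=> i k k' [z hz] hkk'; exists ((1 - fk k) * z); by rewrite mulrA -Hsub.
  move=> i; have : I s`_i.
    apply/Hs; exists (fun j => if j == i then 1 else 0).
    rewrite (bigD1 i) //= eqxx mul1r big1 ?addr0 // => j /negPf ->; by rewrite mul0r.
  by case=> k [z hz]; exists k, z.
have : I (1 - fk K.+1) by exists K.+1, 1; rewrite mulr1.
move/Hs => [c hc].
have [z hz] := fin_all_exists HK.
have hw : 1 - fk K.+1 = (1 - fk K) * \sum_(i < size s) c i * z i.
  by rewrite hc mulr_sumr; apply: eq_bigr => i _; rewrite hz mulrCA.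
have [hKi hK0] := Hfk K.
have := congr1 (fun x => fk K * x) hw.
rewrite mulrA mulrBr mulr1 mulrBr mulr1 hKi subrr mul0r.
have [_ [h2 [_ h4]]] := Hstep K.
rewrite mulrC h2 => /eqP; rewrite subr_eq0 => /eqP h; move/eqP: h4; apply; by rewrite h.
Qed.
End Idem.

Section Act.
Variables (A : zmodType) (L : comNzRingType) (act : A -> L -> L).
Hypothesis Ha : is_ring_action act.

Lemma actD a x y : act a (x + y) = act a x + act a y.
Proof. by case: Ha. Qed.
Lemma actM a x y : act a (x * y) = act a x * act a y.
Proof. by case: Ha. Qed.
Lemma act1 a : act a 1 = 1.
Proof. by case: Ha. Qed.
Lemma act0x x : act 0 x = x.
Proof. by case: Ha. Qed.
Lemma actA a b x : act (a + b) x = act a (act b x).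
Proof. by case: Ha. Qed.
Lemma act0 a : act a 0 = 0.
Proof. by apply: (addrI (act a 0)); rewrite -actD !addr0. Qed.
Lemma actN a x : act a (- x) = - act a x.
Proof. by apply: (addrI (act a x)); rewrite -actD !subrr act0. Qed.
Lemma actB a x y : act a (x - y) = act a x - act a y.
Proof. by rewrite actD actN. Qed.
Lemma actK a x : act (- a) (act a x) = x.
Proof. by rewrite -actA addNr act0x. Qed.
Lemma actKV a x : act a (act (- a) x) = x.
Proof. by rewrite -actA subrr act0x. Qed.
Lemma act_inj a : injective (act a).
Proof. by move=> x y h; rewrite -(actK a x) h actK. Qed.
Lemma act_sum a I (r : seq I) (P : pred I) (F : I -> L) :
  act a (\sum_(i <- r | P i) F i) = \sum_(i <- r | P i) act a (F i).
Proof. exact: (big_morph (act a) (actD a) (act0 a)). Qed.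
Lemma act_prod a I (r : seq I) (P : pred I) (F : I -> L) :
  act a (\prod_(i <- r | P i) F i) = \prod_(i <- r | P i) act a (F i).
Proof. exact: (big_morph (act a) (actM a) (act1 a)). Qed.
Lemma actX a x k : act a (x ^+ k) = act a x ^+ k.
Proof. by elim: k => [|k ih]; rewrite ?expr0 ?act1 // !exprS actM ih. Qed.

Lemma act_prim a e : prim e -> prim (act a e).
Proof.
case=> he he0 hp; split.
- by rewrite /idem -actM he.
- apply/eqP => h; move/eqP: he0; apply; by rewrite -(actK a e) h act0.
- move=> f hf hfe.
  have hf' : idem (act (-a) f) by rewrite /idem -actM hf.
  have : act (-a) f * e = act (-a) f by rewrite -[in X in _ * X](actK a e) -actM hfe.
  case/(hp _ hf') => h.
    by left; rewrite -(actKV a f) h act0.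
  by right; rewrite -(actKV a f) h.
Qed.

Lemma orbit_fin (HS : act_simple act) e : prim e ->
  exists ps : seq (L * A), 1 = \sum_(p <- ps) p.1 * act p.2 e.
Proof.
move=> pe; pose J x := exists ps : seq (L * A), x = \sum_(p <- ps) p.1 * act p.2 e.
have HJ : is_act_ideal act J.
  split; first split.
  - by exists [::]; rewrite big_nil.
  - move=> x y [p1 ->] [p2 ->]; exists (p1 ++ p2); by rewrite big_cat.
  - move=> b x [p ->]; exists (map (fun q => (b * q.1, q.2)) p).
    by rewrite big_map mulr_sumr; apply: eq_bigr => q _; rewrite mulrA.
  - move=> b x [p ->]; exists (map (fun q => (act b q.1, b + q.2)) p).
    by rewrite big_map act_sum; apply: eq_bigr => q _; rewrite actM actA.
case: HS => _ /(_ J HJ) [h|h].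
- exfalso; case: pe => _ he0 _; move/eqP: he0; apply; apply/h.
  by exists [:: (1, 0)]; rewrite big_seq1 mul1r act0x.
- exact: h.
Qed.

End Act.

Section Free.
Variables (G : finZmodType) (L : comNzRingType) (act : (int * G)%type -> L -> L).
Hypothesis Ha : is_ring_action act.
Variables (C : comNzRingType) (actC : G -> C -> C) (iota : C -> L).
Hypothesis HaC : is_ring_action actC.
Hypothesis iD : forall x y, iota (x + y) = iota x + iota y.
Hypothesis iM : forall x y, iota (x * y) = iota x * iota y.
Hypothesis i1 : iota 1 = 1.
Hypothesis iact : forall mu c, iota (actC mu c) = act (0, mu) (iota c).
Hypothesis Hcl : act_closed actC.

Lemma actGG x y z : act (0%:Z, x) (act (0%:Z, y) z) = act (0%:Z, x + y) z.
Proof. by rewrite -(actA Ha). Qed.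

Lemma i0 : iota 0 = 0.
Proof. by apply: (addrI (iota 0)); rewrite -iD !addr0. Qed.

Lemma isum I (r : seq I) (P : pred I) (F : I -> C) :
  iota (\sum_(i <- r | P i) F i) = \sum_(i <- r | P i) iota (F i).
Proof. exact: (big_morph iota iD i0). Qed.

Variable u : L.
Hypothesis pu : prim u.

Definition H : {set G} := [set h : G | act (0%:Z, h) u == u].
Lemma H0 : 0 \in H.
Proof. by rewrite inE (act0x Ha). Qed.
Lemma HD h h' : h \in H -> h' \in H -> h + h' \in H.
Proof. by rewrite !inE => /eqP h1 /eqP h2; rewrite -actGG h2 h1. Qed.
Lemma HN h : h \in H -> - h \in H.
Proof.
rewrite !inE => /eqP h1; apply/eqP.
by rewrite -{1}h1 actGG addNr (act0x Ha).
Qed.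
Lemma HB h h' : h \in H -> h' \in H -> h - h' \in H.
Proof. by move=> a b; apply: HD => //; apply: HN. Qed.

Definition lead (t : G) : G := [arg min_(x < t | x - t \in H) enum_rank x].

Lemma lead_spec t : lead t - t \in H /\ forall x, x - t \in H -> (enum_rank (lead t) <= enum_rank x)%N.
Proof.
rewrite /lead; case: arg_minnP; first by rewrite subrr H0.
by move=> i hi hmin; split.
Qed.

Lemma lead_coset t t' : t' - t \in H -> lead t' = lead t.
Proof.
move=> htt.
have eqv : forall x, (x - t' \in H) = (x - t \in H).
  move=> x; apply/idP/idP => hx.
    by have := HD hx htt; rewrite addrA subrK.
  by have := HB hx htt; rewrite opprB addrA subrK.
have [h1 m1] := lead_spec t; have [h2 m2] := lead_spec t'.
apply: enum_rank_inj; apply: val_inj; apply/eqP; rewrite eqn_leq; apply/andP; split.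
  by apply: m2; rewrite eqv.
by apply: m1; rewrite -eqv.
Qed.

Definition transv (W : {set G}) := forall t,
  (exists h, h \in H /\ t + h \in W) /\
  (forall h h', h \in H -> h' \in H -> t + h \in W -> t + h' \in W -> h = h').

Lemma transv_exists : exists W, transv W.
Proof.
exists [set x | lead x == x] => t; split.
  exists (lead t - t); have [h1 _] := lead_spec t; split=> //.
  rewrite addrC subrK inE; apply/eqP; exact: lead_coset.
move=> h h' hh hh'; rewrite !inE => /eqP e1 /eqP e2.
have : t + h = t + h'.
  rewrite -e1 -e2 (@lead_coset t (t + h)) ?(@lead_coset t (t + h')) //.
    by rewrite addrC addKr.
  by rewrite addrC addKr.
exact: addrI.
Qed.

Lemma transv_shift W nu : transv W -> transv [set t | nu + t \in W].
Proof.
move=> hW t; have [[h [hh hw]] hu] := hW (nu + t); split.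
  by exists h; split=> //; rewrite inE addrA.
by move=> a b ha hb; rewrite !inE !addrA; apply: hu.
Qed.


Definition NV := #|{: 'I_1 * G}|.
Definition pt (W : {set G}) : 'I_NV -> C := fun j => if (enum_val j).2 \in W then 1 else 0.
Definition Xt (t : G) : dpoly G C 1 := 'X_(dvar (ord0, t)).

Lemma ptX W t : (Xt t).@[pt W] = if t \in W then 1 else 0.
Proof. by rewrite /Xt mevalXU /pt /dvar enum_rankK. Qed.

Lemma actC_pt nu (b : bool) : actC nu (if b then 1 else 0) = if b then 1 else 0.
Proof. by case: b; rewrite ?(act1 HaC) ?(act0 HaC). Qed.

Lemma dact_eval W nu (p : dpoly G C 1) :
  (dpoly_act actC nu p).@[pt W] = actC nu (p.@[pt [set t | nu + t \in W]]).
Proof.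
rewrite /dpoly_act /mmap rmorph_sum mevalE (act_sum HaC).
apply: eq_bigr => m _.
rewrite /= mevalM mevalC (actM HaC) /mmap1 rmorph_prod (act_prod HaC) /=.
congr (_ * _); apply: eq_bigr => j _.
rewrite rmorphXn /= mevalXU (actX HaC) /pt /dvar enum_rankK /= inE actC_pt //.
Qed.

Lemma free_u g : act (0%:Z, g) u = u -> g = 0.
Proof.
move=> hg; apply: NNPP => hg0.
have gH : g \in H by rewrite inE hg.
case: pu => hu hu0 _.
pose I (p : dpoly G C 1) := forall W, transv W -> p.@[pt W] = 0.
have HI : is_act_ideal (@dpoly_act G C actC 1) I.
  split; first split.
  - by move=> W _; rewrite meval0.
  - by move=> p q hp hq W hW; rewrite mevalD hp // hq // addr0.
  - by move=> a p hp W hW; rewrite mevalM hp // mulr0.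
  - move=> nu p hp W hW; rewrite dact_eval hp ?(act0 HaC) //; exact: transv_shift.
have Hz : forall a, zero_set actC I a -> False.
  move=> a ha.
  pose al := a ord0.
  pose v := fun j : 'I_NV => actC (enum_val j).2 (a (enum_val j).1).
  have evX : forall t, (Xt t).@[v] = actC t al.
    by move=> t; rewrite /Xt mevalXU /v /dvar enum_rankK.
  have E1 : al * al = al.
    have : I (Xt 0 * Xt 0 - Xt 0).
      move=> W hW; rewrite mevalB mevalM !ptX.
      by case: ifP => _; rewrite ?mulr1 ?subrr ?mul0r ?subr0.
    move/ha; rewrite /dpoly_eval -/v mevalB mevalM !evX (act0x HaC).
    by move/eqP; rewrite subr_eq0 => /eqP.
  have E2 : al * actC g al = 0.
    have : I (Xt 0 * Xt g).
      move=> W hW; rewrite mevalM !ptX.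
      case: ifP => h0; last by rewrite mul0r.
      case: ifP => hgW; last by rewrite mulr0.
      exfalso; apply: hg0; symmetry; apply: ((hW 0).2 0 g H0 gH); by rewrite ?add0r ?addr0.
    by move/ha; rewrite /dpoly_eval -/v mevalM !evX (act0x HaC).
  have E3 : \sum_(h in H) actC h al = 1.
    have : I (\sum_(h in H) Xt h - 1).
      move=> W hW; rewrite mevalB meval1 rmorph_sum /=.
      have [[h0 [h0H h0W]] huniq] := hW 0.
      rewrite (bigD1 h0) //= ptX; move: (h0W); rewrite add0r => ->.
      rewrite big1 ?addr0 ?subrr //.
      move=> h /andP[hH hne]; rewrite ptX; case: ifP => // hW'.
      exfalso; move/eqP: hne; apply; apply: huniq => //; rewrite add0r //.
    move/ha; rewrite /dpoly_eval -/v mevalB meval1 rmorph_sum /=.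
    under eq_bigr do rewrite evX.
    by move/eqP; rewrite subr_eq0 => /eqP.
  pose b := iota al.
  have hb : idem b by rewrite /idem -iM E1.
  have hsum : \sum_(h in H) act (0%:Z, h) b = 1.
    by rewrite -i1 -E3 isum; apply: eq_bigr => h _; rewrite iact.
  case: (prim_idem pu hb) => hbu.
    move/eqP: hu0; apply.
    rewrite -[u]mul1r -hsum mulr_suml big1 // => h hH.
    move: (hH); rewrite inE => /eqP hh.
    by rewrite -[in X in _ * X]hh -(actM Ha) hbu (act0 Ha).
  move/eqP: hu0; apply.
  have e2 : b * act (0%:Z, g) b = 0 by rewrite -iact -iM E2 i0.
  have : b * u * (act (0%:Z, g) b * u) = 0 by rewrite mulrACA e2 mul0r.
  by rewrite -{2}hg -(actM Ha) hbu hg hu.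
have [W0 hW0] := transv_exists.
have := (Hcl HI 1).2.
case.
  by move=> a ha; exfalso; exact: Hz a ha.
move=> k; rewrite expr1n => h1; have := h1 W0 hW0; rewrite meval1 => /eqP.
by rewrite oner_eq0.
Qed.
End Free.

Section Main.
Variables (G : finZmodType) (L : comNzRingType) (act : (int * G)%type -> L -> L).
Hypothesis Ha : is_ring_action act.
Variable e : L.
Hypothesis pe : prim e.
Variable ps : seq (L * (int * G)%type).
Hypothesis Hps : 1 = \sum_(p <- ps) p.1 * act p.2 e.
Hypothesis Hfree : forall u, prim u -> forall g, act (0%:Z, g) u = u -> g = 0.

Lemma aGG x y z : act (0%:Z, x) (act (0%:Z, y) z) = act (0%:Z, x + y) z.
Proof. by rewrite -(actA Ha). Qed.
Lemma aGK t z : act (0%:Z, - t) (act (0%:Z, t) z) = z.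
Proof. by rewrite aGG addNr (act0x Ha). Qed.

Definition orb v := exists s, v = act s e.
Definition E0 := map (fun p => act p.2 e) ps.

Lemma orb_prim v : orb v -> prim v.
Proof. by case=> s ->; exact: act_prim. Qed.
Lemma orb_act s v : orb v -> orb (act s v).
Proof. by case=> s' ->; exists (s + s'); rewrite (actA Ha). Qed.
Lemma E0_orb v : v \in E0 -> orb v.
Proof. by case/mapP => p _ ->; exists p.2. Qed.

Lemma inE0 v : orb v -> v \in E0.
Proof.
move=> ov; apply: NNPP => hv.
have [_ hv0 _] := orb_prim ov.
move/eqP: hv0; apply.
rewrite -[v]mul1r Hps mulr_suml big_seq big1 // => p pin.
have pp : prim (act p.2 e) by apply: orb_prim; exists p.2.
case: (prim_orth pp (orb_prim ov)) => h; first by rewrite -mulrA h mulr0.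
by exfalso; apply: hv; rewrite -h; apply: (map_f (fun p => act p.2 e)).
Qed.

Definition Rel (v w : L) := [exists t : G, v == act (0%:Z, t) w].
Definition rho (w : L) := nth 0 E0 (find (fun v => Rel v w) E0).

Lemma rhoP w : orb w -> (exists t, rho w = act (0%:Z, t) w) /\ rho w \in E0.
Proof.
move=> ow.
have hh : has (fun v => Rel v w) E0.
  apply/hasP; exists w; first exact: inE0.
  by apply/existsP; exists 0; rewrite (act0x Ha).
split; last by rewrite /rho mem_nth // -has_find.
by have := nth_find 0 hh; rewrite -/(rho w) => /existsP[t /eqP ->]; exists t.
Qed.

Lemma rho_shift w t : rho (act (0%:Z, t) w) = rho w.
Proof.
rewrite /rho; congr nth; apply: eq_find => v.
apply/existsP/existsP => -[x /eqP ->].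
  by exists (x + t); rewrite aGG.
by exists (x - t); rewrite aGG addrNK.
Qed.

Definition reps := undup (map rho E0).
Definition n := size reps.
Definition r (i : 'I_n) := nth 0 reps i.

Lemma r_in (i : 'I_n) : r i \in map rho E0.
Proof. by rewrite -mem_undup mem_nth. Qed.

Lemma r_orb i : orb (r i).
Proof.
have /mapP[w hw ->] := r_in i.
have [[t ->] _] := rhoP (E0_orb hw).
exact/orb_act/E0_orb.
Qed.

Lemma rho_r i : rho (r i) = r i.
Proof.
have /mapP[w hw hr] := r_in i.
have [[t ht] _] := rhoP (E0_orb hw).
by rewrite {1}hr ht rho_shift -hr.
Qed.

Lemma rho_in v : orb v -> exists i : 'I_n, rho v = r i.
Proof.
move=> ov.
have hm : rho v \in reps by rewrite mem_undup; apply: map_f; exact: inE0.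
have hlt : (index (rho v) reps < n)%N by rewrite /n index_mem.
exists (Ordinal hlt).
by rewrite /r /= nth_index.
Qed.

Lemma DIST i j t : act (0%:Z, t) (r j) = r i -> j = i /\ t = 0.
Proof.
move=> h.
have hji : r j = r i by rewrite -(rho_r i) -h rho_shift rho_r.
have ej : j = i.
  apply: val_inj; apply/eqP.
  by rewrite -(nth_uniq 0 (ltn_ord j) (ltn_ord i) (undup_uniq _)); apply/eqP.
split=> //; apply: (Hfree (orb_prim (r_orb j))); by rewrite h hji.
Qed.

Lemma uniq_rep i j t t' : act (0%:Z, t) (r i) = act (0%:Z, t') (r j) -> i = j /\ t = t'.
Proof.
move=> h.
have : act (0%:Z, - t' + t) (r i) = r j by rewrite -aGG h aGK.
case/DIST => -> h0; split=> //.
by move/eqP: h0; rewrite addrC subr_eq0 => /eqP.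
Qed.

Lemma n_gt0 : (0 < n)%N.
Proof.
have oe : orb e by exists 0; rewrite (act0x Ha).
have [i _] := rho_in oe.
by apply: leq_ltn_trans (ltn_ord i).
Qed.

Definition S := \sum_(i < n) \sum_(t : G) act (0%:Z, t) (r i).

Lemma Sv v : orb v -> S * v = v.
Proof.
move=> ov.
have [i0 hi0] := rho_in ov.
have [[s hs] _] := rhoP ov.
have hv : v = act (0%:Z, - s) (r i0) by rewrite -hi0 hs aGK.
have [hvi _ _] := orb_prim ov.
rewrite /S mulr_suml (bigD1 i0) //= mulr_suml (bigD1 (- s)) //= -hv hvi.
rewrite !big1 ?addr0 //.
  move=> i hi; rewrite mulr_suml big1 // => t _.
  case: (prim_orth (orb_prim (orb_act (0%:Z, t) (r_orb i))) (orb_prim ov)) => // h.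
  exfalso; move: h; rewrite hv => /uniq_rep [h _]; by move/eqP: hi.
move=> t ht.
case: (prim_orth (orb_prim (orb_act (0%:Z, t) (r_orb i0))) (orb_prim ov)) => // h.
exfalso; move: h; rewrite hv => /uniq_rep [_ h]; by move/eqP: ht.
Qed.

Lemma S1 : S = 1.
Proof.
rewrite -[S]mulr1 Hps mulr_sumr.
apply: eq_bigr => p _; rewrite mulrCA Sv //; by exists p.2.
Qed.


Hypothesis He0 : e != 0.
Hypothesis Hfe : forall x, x * e = 0 \/ exists y, x * e * y = e.
Variable s : 'I_n -> (int * G)%type.
Hypothesis Hs : forall i, r i = act (s i) e.

Definition FF := FQF He0 Hfe.
Definition pF (x : L) : FF := piF He0 Hfe x.
Definition phi (x : L) (i : 'I_n) (t : G) : FF := pF (act (- s i) (act (0%:Z, - t) x)).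
Definition psi (f : 'I_n -> G -> FF) : L :=
  \sum_(i < n) \sum_(t : G) act (0%:Z, t) (act (s i) (repr (f i t : FQ He0) * e)).

Lemma pF_e y : repr (pF y : FQ He0) * e = y * e.
Proof. by apply/(piF_eqE He0 Hfe); rewrite piF_repr. Qed.

Lemma aGKV t z : act (0%:Z, t) (act (0%:Z, - t) z) = z.
Proof. by rewrite aGG subrr (act0x Ha). Qed.

Lemma psiK : cancel phi psi.
Proof.
move=> x; rewrite /psi -[RHS]mulr1 -S1 /S mulr_sumr; apply: eq_bigr => i _.
rewrite mulr_sumr; apply: eq_bigr => t _.
by rewrite /phi pF_e !(actM Ha) (actKV Ha) aGKV Hs.
Qed.

Lemma eidem : e * e = e.
Proof. by case: pe. Qed.

Lemma zero_term i i' t t' w : ~ (i' = i /\ t' = t) ->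
  piF He0 Hfe (act (- s i) (act (0%:Z, - t) (act (0%:Z, t') (act (s i') (w * e))))) = 0.
Proof.
move=> hne.
rewrite !(actM Ha) -Hs.
set T := act (- s i) (act (0%:Z, - t) (act (0%:Z, t') (r i'))).
have pT : prim T by apply/orb_prim/orb_act/orb_act/orb_act/r_orb.
rewrite -(piF0 He0 Hfe); apply/(piF_eqE He0 Hfe); rewrite mul0r -mulrA.
case: (prim_orth pT pe) => h; first by rewrite h mulr0.
exfalso; apply: hne.
have : act (s i) T = act (s i) e by rewrite h.
rewrite /T (actKV Ha) -Hs aGG => /DIST [-> h0]; split=> //.
by move/eqP: h0; rewrite addrC subr_eq0 => /eqP.
Qed.

Lemma phiK : cancel psi phi.
Proof.
move=> f; apply: functional_extensionality => i; apply: functional_extensionality => t.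
rewrite /phi /psi !(act_sum Ha) /pF (piF_sum He0 Hfe) (bigD1 i) //=.
rewrite !(act_sum Ha) (piF_sum He0 Hfe) (bigD1 t) //= aGK (actK Ha).
have -> : piF He0 Hfe (repr (f i t : FQ He0) * e) = f i t.
  rewrite -[RHS](@piF_repr _ _ He0 Hfe); apply/(piF_eqE He0 Hfe); by rewrite -mulrA eidem.
rewrite !big1 ?addr0 //.
  move=> i' hi'; rewrite (act_sum Ha) (act_sum Ha) (piF_sum He0 Hfe) big1 // => t' _.
  by apply: zero_term => -[h _]; move/eqP: hi'.
move=> t' ht'.
by apply: zero_term => -[_ h]; move/eqP: ht'.
Qed.

Lemma phi1 i t : phi 1 i t = 1.
Proof. by rewrite /phi /pF !(act1 Ha) piF1. Qed.
Lemma phiD x y i t : phi (x + y) i t = phi x i t + phi y i t.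
Proof. by rewrite /phi /pF !(actD Ha) piFD. Qed.
Lemma phiM x y i t : phi (x * y) i t = phi x i t * phi y i t.
Proof. by rewrite /phi /pF !(actM Ha) piFM. Qed.
Lemma phi_eqv mu x i t : phi (act (0%:Z, mu) x) i t = phi x i (t - mu).
Proof. by rewrite /phi aGG opprB addrC. Qed.
End Main.

Unset Implicit Arguments.

Theorem proposition8 (G : finZmodType) (L : comNzRingType)
  (act : (int * G)%type -> L -> L) :
  is_ring_action act ->
  act_pseudofield act ->
  noetherian_ring L ->
  invariants_closed_pseudofield act ->
  exists (F : fieldType) (n : nat), (0 < n)%N /\
    exists phi : L -> 'I_n -> G -> F,
      [/\ bijective phi,
          forall i tau, phi 1 i tau = 1,
          forall x y i tau, phi (x + y) i tau = phi x i tau + phi y i tau,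
          forall x y i tau, phi (x * y) i tau = phi x i tau * phi y i tau &
          forall mu x i tau, phi (act (0, mu) x) i tau = phi x i (tau - mu)].
Proof.
move=> Ha [Hflat HS] HN [C [actC [iota [HaC [iD iM i1 iinj] Hinv iact [_ Hcl]]]]].
have reg := regular Hflat.
have [e pe] := exists_prim HN.
have He0 : e != 0 by case: pe.
have Hfe := prim_field reg pe.
have [ps Hps] := orbit_fin Ha HS pe.
have Hfree : forall u, prim u -> forall g, act (0%:Z, g) u = u -> g = 0.
  by move=> u pu g; apply: (free_u Ha HaC iD iM i1 iact Hcl pu).
have [s Hs] := fin_all_exists (r_orb Ha pe Hps).
exists (FF He0 Hfe), (n act e ps); split; first exact: (n_gt0 Ha pe Hps).
exists (phi He0 Hfe s); split.
- exists (@psi _ _ _ _ _ He0 Hfe s).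
  + exact: (psiK Ha pe Hps Hfree He0 Hfe Hs).
  + exact: (@phiK _ _ _ Ha _ pe _ Hps Hfree He0 Hfe s Hs).
- by move=> i t; rewrite (phi1 Ha).
- by move=> x y i t; rewrite (phiD Ha).
- by move=> x y i t; rewrite (phiM Ha).
- by move=> mu x i t; rewrite (phi_eqv Ha).
Qed.
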